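(* Let $k\geq 3$ be an integer, let $D$ be a digraph containing no subdivision of $B(k,1;1)$, let $\mathcal{C}$ be a nice collection of directed cycles of $D$ (with respect to $k$), and let $\mathcal{S}$ be a component of $\mathcal{C}$. Then the subdigraph of $D$ induced by $V(\bigcup\mathcal{S})$ has chromatic number at most $2k-2$.
   Context: Chromatic number of a digraph means that of its underlying undirected graph. For a positive integer $k$, a collection $\mathcal{C}$ of directed cycles of a digraph $D$ is nice if every cycle of $\mathcal{C}$ has length at least $2k-2$ and any two distinct cycles of $\mathcal{C}$ share at most one vertex. The components of $\mathcal{C}$ are the sets of cycles corresponding to connected components of the graph with vertex set $\mathcal{C}$ in which two cycles are adjacent iff they share a vertex. $V(\bigcup\mathcal{S})$ is the union of the vertex sets of the cycles in $\mathcal{S}$. A digraph contains a subdivision of $B(k_1,k_2;k_3)$ if there exist distinct vertices $u,v$ and three pairwise internally vertex-disjoint directed paths: two from $u$ to $v$ of lengths at least $k_1$ and $k_2$, and one from $v$ to $u$ of length at least $k_3$. *)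

(* Defs.v *)
From mathcomp Require Import all_boot.
Set Implicit Arguments. Unset Strict Implicit. Unset Printing Implicit Defensive.

(* A digraph on a finite vertex type T is an arc relation D : rel T
   (D x y means there is an arc x -> y); digraphs are loopless
   (irreflexive D), multiple arcs are irrelevant for these notions. *)

Section Digraphs.
Variables (T : finType) (D : rel T).

(* A directed cycle is given by the cyclic sequence of its (distinct)
   vertices [:: v0; ...; v_(l-1)], with arcs v_i -> v_(i+1) and
   v_(l-1) -> v0; its length is l = size c >= 2. *)
Definition dcycle (c : seq T) : bool :=
  [&& 2 <= size c, uniq c & cycle D c].

(* A directed path from u to v with interior vertex sequence q:
   u :: q ++ [:: v] is a directed path with distinct vertices;
   its length is size q + 1. *)
Definition dpath (u v : T) (q : seq T) : bool :=
  path D u (rcons q v) && uniq (u :: rcons q v).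

Definition disjoint_seq (p q : seq T) : bool := all (fun x => x \notin q) p.

Definition has_subdiv_B (k1 k2 k3 : nat) : Prop :=
  exists (u v : T) (q1 q2 q3 : seq T),
    [/\ u != v,
        dpath u v q1 /\ k1 <= (size q1).+1,
        dpath u v q2 /\ k2 <= (size q2).+1,
        dpath v u q3 /\ k3 <= (size q3).+1
      & [/\ q1 != q2 ,
             disjoint_seq q1 q2, disjoint_seq q1 q3 & disjoint_seq q2 q3]].

Definition nice_collection (k : nat) (I : finType) (C : I -> seq T) : Prop :=
  (forall i, dcycle (C i) /\ 2 * k - 2 <= size (C i)) /\
  (forall i j, i != j -> #|[pred x | (x \in C i) && (x \in C j)]| <= 1).

End Digraphs.

Definition share_vertex (T : finType) (I : finType) (C : I -> seq T) : rel I :=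
  fun i j => has (fun x => x \in C j) (C i).

(* S is a component of the collection: the vertex set of a connected
   component of the intersection graph. *)
Definition is_component (T I : finType) (C : I -> seq T) (S : {set I}) : Prop :=
  exists i, S = [set j | connect (share_vertex C) i j].

Definition union_vertices (T I : finType) (C : I -> seq T) (S : {set I}) : {set T} :=
  [set x | [exists i in S, x \in C i]].

(* The subdigraph of D induced by X has chromatic number at most m:
   a proper m-colouring of its underlying undirected graph exists. *)
Definition induced_colorable (T : finType) (D : rel T) (X : {set T}) (m : nat) : Prop :=
  exists f : T -> 'I_m,
    forall x y, x \in X -> y \in X -> D x y -> f x != f y.

(* Main.v *)
Require Import Defs.
From mathcomp Require Import all_boot zify.
Set Implicit Arguments. Unset Strict Implicit. Unset Printing Implicit Defensive.


Section Basics.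
Variables (T : eqType).

Definition disj (s t : seq T) := all (fun z => z \notin t) s.

Lemma disj_nill t : disj [::] t = true. Proof. by []. Qed.
Lemma disj_consl x s t : disj (x :: s) t = (x \notin t) && disj s t. Proof. by []. Qed.
Lemma disj_catl s1 s2 t : disj (s1 ++ s2) t = disj s1 t && disj s2 t.
Proof. by rewrite /disj all_cat. Qed.
Lemma disj_nilr s : disj s [::] = true. Proof. by elim: s. Qed.
Lemma disj_consr x s t : disj s (x :: t) = (x \notin s) && disj s t.
Proof.
elim: s => //= y s ->; rewrite !inE eq_sym negb_or.
by case: (x == y); case: (y \in t); case: (x \in s); case: (disj s t).
Qed.
Lemma disj_catr s t1 t2 : disj s (t1 ++ t2) = disj s t1 && disj s t2.
Proof.
elim: s => //= y s ->; rewrite mem_cat negb_or.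
by case: (y \in t1); case: (y \in t2); case: (disj s t1); case: (disj s t2).
Qed.
Lemma disj_sym s t : disj s t = disj t s.
Proof. by elim: s => [|x s IH]; rewrite ?disj_nilr // disj_consl disj_consr IH. Qed.
Lemma uniq_catD s t : uniq (s ++ t) = [&& uniq s, uniq t & disj s t].
Proof.
rewrite cat_uniq has_sym -all_predC /disj.
by case: (uniq s); case: (uniq t); case: (all _ _).
Qed.

Definition disjE := (disj_nill, disj_consl, disj_catl, disj_nilr, disj_consr, disj_catr,
  uniq_catD, cons_uniq, andbT, andTb).

Lemma disjP s t : reflect (forall z, z \in s -> z \notin t) (disj s t).
Proof. exact: allP. Qed.

End Basics.

Ltac bsplit := repeat match goal with H : is_true (_ && _) |- _ =>
  let a := fresh "b" in let b := fresh "b" in case/andP: H => a b end.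
Ltac simplm := rewrite ?disjE; do 3 rewrite ?mem_cat ?inE ?negb_or.
Ltac bgoal := repeat (apply/andP; split); try assumption; try (rewrite disj_sym; assumption); try (rewrite eq_sym; assumption).

Section B.
Variables (T : finType) (D : rel T) (k : nat).
Hypothesis k3 : 3 <= k.

Lemma mkB u v q1 q2 q3 :
  path D u (rcons q1 v) -> path D u (rcons q2 v) -> path D v (rcons q3 u) ->
  uniq (u :: v :: q1 ++ q2 ++ q3) -> k <= (size q1).+1 -> has_subdiv_B D k 1 1.
Proof.
move=> p1 p2 p3 U hk.
move: U; simplm => U; bsplit.
exists u, v, q1, q2, q3; split => //.
- split => //; rewrite /dpath p1 -cats1 /=; simplm; bgoal.
- split => //; rewrite /dpath p2 -cats1 /=; simplm; bgoal.
- split => //; rewrite /dpath p3 -cats1 /=; simplm; bgoal.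
- split => //.
  move: hk b3; clear -k3; case: q1 => [|a q1] /=; first by lia.
  rewrite ?disjE => _ /andP[aq2 _]; apply/eqP => E; by rewrite -E inE eqxx in aq2.
Qed.

Lemma cyc_split x y p1 p2 : cycle D (x :: p1 ++ y :: p2) ->
  path D x (rcons p1 y) /\ path D y (rcons p2 x).
Proof.
rewrite /= rcons_cat cat_path /= rcons_path.
by rewrite rcons_path; case/and4P=> -> -> -> ->.
Qed.

Lemma cyc_rot x y p1 p2 : cycle D (x :: p1 ++ y :: p2) -> uniq (x :: p1 ++ y :: p2) ->
  cycle D (y :: p2 ++ x :: p1) /\ uniq (y :: p2 ++ x :: p1).
Proof.
have E : rot (size (x :: p1)) ((x :: p1) ++ (y :: p2)) = (y :: p2) ++ (x :: p1).
  by rewrite rot_size_cat.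
by rewrite -(rot_cycle (size (x :: p1))) -(rot_uniq (size (x :: p1))) E.
Qed.

Lemma path_join a b c s t : path D a (rcons s b) -> path D b (rcons t c) ->
  path D a (rcons (s ++ b :: t) c).
Proof. by rewrite rcons_cat cat_path rcons_path /= => /andP[-> ->] ->. Qed.

Lemma split2 c a b : cycle D c -> uniq c -> a \in c -> b \in c -> a != b ->
  exists p1 p2, [/\ cycle D (a :: p1 ++ b :: p2), uniq (a :: p1 ++ b :: p2),
     a :: p1 ++ b :: p2 =i c & size c = size p1 + size p2 + 2].
Proof.
move=> cc uc ac bc ab; case/rot_to: ac => i s E.
have : b \in a :: s by rewrite -E mem_rot.
rewrite inE eq_sym (negbTE ab) orFb => Hb.
case: (splitPr Hb) E => p1 p2 E.
exists p1, p2; rewrite -E rot_cycle rot_uniq; split => //.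
- by move=> z; rewrite mem_rot.
- by rewrite -(size_rot i) E /= size_cat /=; lia.
Qed.

Hypothesis noB : ~ has_subdiv_B D k 1 1.

Lemma chordL x y p1 p2 : cycle D (x :: p1 ++ y :: p2) -> uniq (x :: p1 ++ y :: p2) ->
  D x y -> size p1 + 2 <= k.
Proof.
move=> cc uc dxy; rewrite leqNgt; apply/negP => hk; apply: noB.
have [P1 P2] := cyc_split cc.
apply: (@mkB x y p1 [::] p2) => //=; first by rewrite dxy.
  by move: uc; simplm => uc; bsplit; simplm; bgoal.
by move: hk k3; clear; lia.
Qed.

Lemma B2 p q x s1 s2 t1 t2 r :
  cycle D (p :: s1 ++ q :: s2) -> uniq (p :: s1 ++ q :: s2) -> 2*k-2 <= size s1 + size s2 + 2 ->
  cycle D (p :: t1 ++ x :: t2) -> uniq (p :: t1 ++ x :: t2) ->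
  disj (t1 ++ x :: t2) (p :: s1 ++ q :: s2) ->
  path D x (rcons r q) -> uniq r -> disj r (p :: s1 ++ q :: s2) -> disj r (p :: t1 ++ x :: t2) ->
  False.
Proof.
move=> cc uc hl cc' uc' d1 R ur d2 d3; apply: noB.
have [P1 P2] := cyc_split cc; have [P1' P2'] := cyc_split cc'.
move: uc uc' d1 d2 d3; simplm => uc uc' d1 d2 d3; bsplit.
case: (leqP k (size s1).+1) => hk.
  apply: (@mkB p q s1 (t1 ++ x :: r) s2) => //; first exact: path_join.
  simplm; bgoal.
apply: (@mkB x p (r ++ q :: s2) t2 t1) => //; first exact: path_join.
  simplm; bgoal.
by rewrite size_cat /=; move: hk hl k3; clear; lia.
Qed.

Lemma B2' p q x s1 s2 t1 t2 r :
  cycle D (p :: s1 ++ q :: s2) -> uniq (p :: s1 ++ q :: s2) -> 2*k-2 <= size s1 + size s2 + 2 ->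
  cycle D (p :: t1 ++ x :: t2) -> uniq (p :: t1 ++ x :: t2) ->
  disj (t1 ++ x :: t2) (p :: s1 ++ q :: s2) ->
  path D q (rcons r x) -> uniq r -> disj r (p :: s1 ++ q :: s2) -> disj r (p :: t1 ++ x :: t2) ->
  False.
Proof.
move=> cc uc hl cc' uc' d1 R ur d2 d3; apply: noB.
have [P1 P2] := cyc_split cc; have [P1' P2'] := cyc_split cc'.
move: uc uc' d1 d2 d3; simplm => uc uc' d1 d2 d3; bsplit.
case: (leqP k (size s2).+1) => hk.
  apply: (@mkB q p s2 (r ++ x :: t2) s1) => //; first exact: path_join.
  simplm; bgoal.
apply: (@mkB p x (s1 ++ q :: r) t1 t2) => //; first exact: path_join.
  simplm; bgoal.
by rewrite size_cat /=; move: hk hl k3; clear; lia.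
Qed.

End B.


Section Greedy.
Lemma greedy (m l : nat) (adj : nat -> nat -> bool) : 0 < m ->
  (forall i, i < l -> size (filter (fun j => adj i j || adj j i) (iota 0 i)) < m) ->
  exists g : nat -> 'I_m, forall i j, i < l -> j < l -> i != j -> adj i j -> g i != g j.
Proof.
move=> m0 hb.
suff: forall n, n <= l -> exists g : nat -> 'I_m,
    forall i j, i < n -> j < n -> i != j -> adj i j -> g i != g j.
  by move/(_ l (leqnn l)).
elim => [_|n IH hn].
  by exists (fun _ => Ordinal m0).
have [g Hg] := IH (ltnW hn).
set E := filter (fun j => adj n j || adj j n) (iota 0 n).
have [c Hc] : exists c : 'I_m, c \notin map g E.
  case: (pickP (fun c : 'I_m => c \notin map g E)) => [c Hc | H]; first by exists c.
  have sub : {subset enum 'I_m <= map g E} by move=> c _; move: (H c) => /negbFE.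
  have := uniq_leq_size (enum_uniq 'I_m) sub.
  by rewrite size_enum_ord size_map => H1; have := hb n hn; rewrite -/E; lia.
exists (fun i => if i == n then c else g i) => i j hi hj hij hadj.
have memE : forall t, t < n -> adj n t || adj t n -> g t \in map g E.
  by move=> t ht ha; apply: map_f; rewrite mem_filter mem_iota ha /=.
case: (eqVneq i n) => [ein|nein]; case: (eqVneq j n) => [ejn|nejn].
- by rewrite ein ejn eqxx in hij.
- have hj' : j < n by rewrite ltnS leq_eqVlt (negbTE nejn) in hj.
  apply/eqP => E1.
  have := memE j hj'; rewrite ein in hadj; rewrite hadj -E1 (negbTE Hc). by move/(_ isT).
- have hi' : i < n by rewrite ltnS leq_eqVlt (negbTE nein) in hi.
  apply/eqP => E1.
  have := memE i hi'; rewrite ejn in hadj; rewrite hadj orbT E1 (negbTE Hc); by move/(_ isT).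
- apply: Hg => //.
  by rewrite ltnS leq_eqVlt (negbTE nein) in hi.
  by rewrite ltnS leq_eqVlt (negbTE nejn) in hj.
Qed.
End Greedy.


Lemma iota_path (R : rel nat) f x m n : (0 < n -> R x (f m)) ->
  (forall s, m <= s -> s.+1 < m + n -> R (f s) (f s.+1)) -> path R x (map f (iota m n)).
Proof.
elim: n x m => [|n IH] x m //= h0 hs.
rewrite h0 //= IH //.
- by move=> hn; apply: hs => //; lia.
- by move=> s h1 h2; apply: hs; lia.
Qed.

Lemma rcons_iota (A : Type) (f : nat -> A) m n :
  rcons (map f (iota m n)) (f (m + n)) = map f (iota m n.+1).
Proof. by rewrite -addn1 iotaD map_cat /= cats1. Qed.

Section Cyc.
Variables (T : finType) (D : rel T).

Lemma cyc_arc c x0 i : cycle D c -> i.+1 < size c -> D (nth x0 c i) (nth x0 c i.+1).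
Proof.
case: c => [|x s] //= /(pathP x0) H hi.
rewrite ltnS in hi.
have := H i; rewrite size_rcons => /(_ (ltnW hi)).
rewrite -rcons_cons !nth_rcons /= hi /=.
by rewrite ltnS (ltnW hi).
Qed.

Lemma cyc_wrap c x0 : cycle D c -> 0 < size c -> D (nth x0 c (size c).-1) (nth x0 c 0).
Proof.
case: c => [|x s] //= /(pathP x0) H _.
have := H (size s); rewrite size_rcons => /(_ (ltnSn _)).
by rewrite -rcons_cons !nth_rcons /= ltnSn ltnn eqxx.
Qed.

Lemma rot_nth1 (s : seq T) x0 n i : n + i < size s -> nth x0 (rot n s) i = nth x0 s (n + i).
Proof.
move=> h; rewrite /rot nth_cat size_drop.
have -> : i < size s - n by lia.
by rewrite nth_drop.
Qed.

Lemma rot_nth2 (s : seq T) x0 n i : n <= size s -> i < size s -> size s <= n + i ->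
  nth x0 (rot n s) i = nth x0 s (n + i - size s).
Proof.
move=> h1 h2 h3; rewrite /rot nth_cat size_drop.
have -> : (i < size s - n) = false by lia.
rewrite nth_take; last by lia.
congr nth; lia.
Qed.

Lemma dec3 (c : seq T) x0 j i : j < i -> i < size c ->
  c = take j c ++ nth x0 c j :: take (i - j.+1) (drop j.+1 c) ++ nth x0 c i :: drop i.+1 c.
Proof.
move=> hji hi.
rewrite -{1}(cat_take_drop j c) (drop_nth x0); last by lia.
congr (_ ++ _ :: _).
rewrite -{1}(cat_take_drop (i - j.+1) (drop j.+1 c)) drop_drop.
have -> : i - j.+1 + j.+1 = i by lia.
by rewrite [drop i c](drop_nth x0).
Qed.

Lemma rot3 (s1 s2 s3 : seq T) x y : cycle D (s1 ++ x :: s2 ++ y :: s3) ->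
  uniq (s1 ++ x :: s2 ++ y :: s3) ->
  cycle D (x :: s2 ++ y :: (s3 ++ s1)) /\ uniq (x :: s2 ++ y :: (s3 ++ s1)).
Proof.
have E : rot (size s1) (s1 ++ (x :: s2 ++ y :: s3)) = x :: s2 ++ y :: (s3 ++ s1).
  by rewrite rot_size_cat /= -catA.
by rewrite -(rot_cycle (size s1)) -(rot_uniq (size s1)) E.
Qed.

Variable (k : nat).
Hypothesis k3 : 3 <= k.
Hypothesis noB : ~ has_subdiv_B D k 1 1.

Lemma idxF c x0 j i : cycle D c -> uniq c -> j < i -> i < size c ->
  (D (nth x0 c j) (nth x0 c i) -> i < j + k) /\
  (D (nth x0 c i) (nth x0 c j) -> size c + j < i + k).
Proof.
move=> cc uc hji hi.
move: (dec3 x0 hji hi) => E.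
have hs2 : size (take (i - j.+1) (drop j.+1 c)) = i - j.+1.
  by rewrite size_takel // size_drop; lia.
have hs1 : size (take j c) = j by rewrite size_takel //; lia.
have hs3 : size (drop i.+1 c) = size c - i.+1 by rewrite size_drop.
rewrite E in cc uc.
have [cc1 uc1] := rot3 cc uc.
have [cc2 uc2] := cyc_rot cc1 uc1.
split => h.
- have := chordL k3 noB cc1 uc1 h; rewrite hs2; lia.
- have := chordL k3 noB cc2 uc2 h; rewrite size_cat hs1 hs3; lia.
Qed.

Lemma twochordB c x0 : cycle D c -> uniq c -> 2*k-1 <= size c ->
  (forall t, t.+2 < size c -> D (nth x0 c t) (nth x0 c t.+2)) -> has_subdiv_B D k 1 1.
Proof.
move=> cc uc hl h2.
set l := size c in hl h2.
pose v i := nth x0 c i.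
have hst : forall a b, a < b <= a.+2 -> b < l -> D (v a) (v b).
  move=> a b /andP[h1 h3] hb.
  case: (ltngtP b a.+2) => h4; last by rewrite h4; apply: h2; rewrite -h4.
  - have -> : b = a.+1 by lia.
    by apply: cyc_arc; lia.
  - by lia.
pose RR := fun a b => (a < b <= a.+2) && (b < l).
have subR : subrel RR (relpre v D) by move=> a b /andP[]; apply: hst.
set n1 := (l.-1)./2; set n2 := (l.-2)./2.
have e1 := odd_double_half l.-1; have e2 := odd_double_half l.-2.
rewrite -/n1 in e1; rewrite -/n2 in e2; rewrite -!addnn in e1 e2.
have o1 : n1 + n1 <= l.-1 <= n1 + n1 + 1 by case: (odd _) e1 => /= <-; lia.
have o2 : n2 + n2 <= l.-2 <= n2 + n2 + 1 by case: (odd _) e2 => /= <-; lia.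
clear e1 e2.
pose h1 s := if s < n1 then (s + s).+1 else l.-1.
pose h2' s := if s < n2 then (s + s).+2 else l.-1.
pose q1 := map (fun s => v (h1 s)) (iota 0 n1).
pose q2 := map (fun s => v (h2' s)) (iota 0 n2).
have lpos : 0 < l by lia.
apply: (@mkB _ _ k k3 (v 0) (v l.-1) q1 q2 [::]).
- have -> : v l.-1 = v (h1 (0 + n1)) by rewrite /h1 add0n ltnn.
  rewrite /q1 rcons_iota (map_comp v h1) path_map; apply: (sub_path subR).
  apply: iota_path.
  + move=> _; rewrite /RR /h1; have -> : 0 < n1 by lia.
    lia.
  + move=> s _ hs; rewrite /RR /h1.
    case: (ltnP s.+1 n1) => hs1; first by rewrite (ltnW hs1); lia.
    have -> : s < n1 by lia.
    lia.
- have -> : v l.-1 = v (h2' (0 + n2)) by rewrite /h2' add0n ltnn.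
  rewrite /q2 rcons_iota (map_comp v h2') path_map; apply: (sub_path subR).
  apply: iota_path.
  + move=> hn; rewrite /RR /h2'.
    case: (ltnP 0 n2) => hn2; lia.
  + move=> s _ hs; rewrite /RR /h2'.
    case: (ltnP s.+1 n2) => hs1; first by rewrite (ltnW hs1); lia.
    have -> : s < n2 by lia.
    lia.
- rewrite /= andbT; apply: (@cyc_wrap c x0) => //.
- have Eq : v 0 :: v l.-1 :: q1 ++ q2 ++ [::] =
     map v (0 :: l.-1 :: map h1 (iota 0 n1) ++ map h2' (iota 0 n2)).
    by rewrite cats0 /= map_cat -!map_comp.
  rewrite Eq map_inj_in_uniq.
  + set A := map h1 (iota 0 n1); set B := map h2' (iota 0 n2).
    have hA : forall z, z \in A -> exists2 s, s < n1 & z = (s + s).+1.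
      by move=> z /mapP [s]; rewrite mem_iota /h1 => /andP[_ hs] ->; rewrite hs; exists s.
    have hB : forall z, z \in B -> exists2 s, s < n2 & z = (s + s).+2.
      by move=> z /mapP [s]; rewrite mem_iota /h2' => /andP[_ hs] ->; rewrite hs; exists s.
    have n0A : (0 \in A) = false by apply/negP => /hA [s _]; lia.
    have n0B : (0 \in B) = false by apply/negP => /hB [s _]; lia.
    have nlA : (l.-1 \in A) = false by apply/negP => /hA [s hs]; lia.
    have nlB : (l.-1 \in B) = false by apply/negP => /hB [s hs]; lia.
    have uA : uniq A.
      rewrite map_inj_in_uniq ?iota_uniq //.
      by move=> a b; rewrite !mem_iota /h1 => /andP[_ ha] /andP[_ hb]; rewrite ha hb; lia.
    have uB : uniq B.
      rewrite map_inj_in_uniq ?iota_uniq //.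
      by move=> a b; rewrite !mem_iota /h2' => /andP[_ ha] /andP[_ hb]; rewrite ha hb; lia.
    have dAB : disj A B.
      apply/allP => z /hA [s hs ->]; apply/negP => /hB [t ht]; lia.
    rewrite cons_uniq in_cons mem_cat n0A n0B cons_uniq mem_cat nlA nlB uniq_catD uA uB dAB.
    have -> : (0 == l.-1) = false by apply/negP => /eqP; lia.
    by [].
  + have hall : forall z, z \in 0 :: l.-1 :: map h1 (iota 0 n1) ++ map h2' (iota 0 n2) -> z < l.
      move=> z; rewrite !inE mem_cat => /or3P[/eqP->|/eqP->|/orP[]]; try lia.
      - by case/mapP => s; rewrite mem_iota /h1 => /andP[_ hs] ->; rewrite hs; lia.
      - by case/mapP => s; rewrite mem_iota /h2' => /andP[_ hs] ->; rewrite hs; lia.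
    move=> a b ha hb /eqP; rewrite /v nth_uniq //; first by move/eqP.
    exact: hall. exact: hall.
- rewrite size_map size_iota; lia.
Qed.
End Cyc.


Section Col.
Variables (T : finType) (D : rel T) (k : nat).
Hypothesis k3 : 3 <= k.
Hypothesis noB : ~ has_subdiv_B D k 1 1.
Hypothesis irrD : irreflexive D.

Lemma cycle_col c : cycle D c -> uniq c -> 2*k-2 <= size c ->
  exists f : T -> 'I_(2*k-2), forall x y, x \in c -> y \in c -> D x y -> f x != f y.
Proof.
move=> cc uc hl.
have : 0 < size c by lia.
case: c cc uc hl => [//|x0 s] cc uc hl _.
set c := x0 :: s in cc uc hl *.
set l := size c in hl *.
have [c' [cc' uc' ec' sc' hex]] : exists c', [/\ cycle D c', uniq c', c' =i c, size c' = l &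
    (l = 2*k-2 \/ ~~ D (nth x0 c' l.-1) (nth x0 c' 1))].
  case: (eqVneq l (2*k-2)) => hl2; first by exists c; split => //; left.
  have hl' : 2*k-1 <= l by lia.
  case: (boolP (has (fun t => ~~ D (nth x0 c t) (nth x0 c t.+2)) (iota 0 (l - 2)))).
  - case/hasP => t; rewrite mem_iota => ht hnd.
    exists (rot t.+1 c); split; rewrite ?rot_cycle ?rot_uniq ?size_rot //.
    + by move=> z; rewrite mem_rot.
    + right; rewrite rot_nth2; try lia.
      rewrite rot_nth1; last by lia.
      have -> : t.+1 + l.-1 - size c = t by rewrite /l; lia.
      by rewrite addn1.
  - move/hasPn => H; exfalso; apply: noB; apply: (@twochordB T D k k3 c x0) => //.
    move=> t ht; have := H t; rewrite mem_iota negbK; apply; lia.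
pose adj i j := D (nth x0 c' i) (nth x0 c' j).
pose L i := if i < l.-1 then iota (i - (k-1)) (k-1) ++ iota 0 (k-2)
            else if l == 2*k-2 then iota 0 (2*k-3) else iota (l-k) (k-1) ++ 0 :: iota 2 (k-3).
have sL : forall i, size (L i) = 2*k-3.
  move=> i; rewrite /L; case: ifP => _; [|case: ifP => _]; rewrite ?size_cat /= !size_iota; lia.
have hb : forall i, i < l -> size (filter (fun j => adj i j || adj j i) (iota 0 i)) < 2*k-2.
  move=> i hi.
  have : size (filter (fun j => adj i j || adj j i) (iota 0 i)) <= size (L i).
    apply: uniq_leq_size; first by rewrite filter_uniq // iota_uniq.
    move=> j; rewrite mem_filter mem_iota add0n => /andP[hadj /andP[_ hji]].
    have [F1 F2] := idxF k3 noB x0 cc' uc' hji (leq_trans hi (eq_leq (esym sc'))).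
    rewrite sc' in F2.
    have G : (j + k > i) \/ (l + j < i + k).
      by case/orP: hadj => h; [right; apply: F2 | left; apply: F1].
    rewrite /L; case: ifP => h1.
      rewrite mem_cat !mem_iota; lia.
    case: ifP => h2.
      rewrite mem_iota; lia.
    rewrite mem_cat inE !mem_iota.
    case: (eqVneq j 1) => [ej|nj].
      have hi' : i = l.-1 by lia.
      case/orP: hadj => h.
        case: hex => [hx|hx]; first by move/eqP: h2; lia.
        by move: hx h; rewrite /adj ej hi' => /negbTE ->.
      have := F1 h; lia.
    case: G => G; lia.
  rewrite sL; lia.
have [g Hg] := @greedy (2*k-2) l adj ltac:(lia) hb.
exists (fun x => g (index x c')) => x y xc yc dxy.
have xc' : x \in c' by rewrite ec'.
have yc' : y \in c' by rewrite ec'.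
apply: Hg; rewrite -?sc' ?index_mem //.
- apply/negP => /eqP E.
  have : x = y by rewrite -(nth_index x0 xc') -(nth_index x0 yc') E.
  by move=> exy; rewrite exy irrD in dxy.
- by rewrite /adj !nth_index.
Qed.
End Col.


Section Conn.
Variables (T : finType) (D : rel T).

Definition rX (A : {set T}) : rel T := fun a b => [&& D a b, a \in A & b \in A].

Lemma path_rX (A : {set T}) x p : x \in A -> all (fun z => z \in A) p -> path D x p -> path (rX A) x p.
Proof.
elim: p x => //= y p IH x xA /andP[yA hp] /andP[dxy hp'].
by rewrite /rX dxy xA yA IH.
Qed.

Lemma rX_all (A : {set T}) x p : path (rX A) x p -> all (fun z => z \in A) p.
Proof.
elim: p x => //= y p IH x /andP[/and3P[_ _ ->] /IH] //.
Qed.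

Lemma rX_D (A : {set T}) x p : path (rX A) x p -> path D x p.
Proof. by apply: sub_path => a b /and3P[]. Qed.

Lemma connect_mono (A B : {set T}) y z : A \subset B -> connect (rX A) y z -> connect (rX B) y z.
Proof.
move=> /subsetP AB; apply: connect_sub => a b /and3P[dab aA bA].
by apply: connect1; rewrite /rX dab !AB.
Qed.

Lemma cycle_conn c (A : {set T}) y z : cycle D c -> uniq c -> {subset c <= A} -> y \in c -> z \in c ->
  connect (rX A) y z.
Proof.
move=> cc uc cA yc zc; case: (eqVneq y z) => [->|yz]; first exact: connect0.
have [p1 [p2 [cc' uc' ec _]]] := split2 (leqnn 3) cc uc yc zc yz.
have [P1 _] := cyc_split cc'.
apply/connectP; exists (rcons p1 z); last by rewrite last_rcons.
apply: path_rX => //; first exact: cA.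
apply/allP => v; rewrite mem_rcons inE => /orP[/eqP->|vp]; first exact: cA.
by apply: cA; rewrite -ec inE mem_cat vp orbT.
Qed.

Lemma extract (A : {set T}) x z : connect (rX A) x z -> x != z ->
  exists p, [/\ path D x (rcons p z), uniq (x :: rcons p z), x \in A &
     all (fun v => v \in A) (rcons p z)].
Proof.
move=> /connectP [p hp ->] xz.
case: (shortenP hp) xz => p' hp' up' _.
case/lastP: p' hp' up' => [|q v] hp' up' xz; first by rewrite /= eqxx in xz.
rewrite last_rcons; exists q; split => //.
- exact: rX_D hp'.
- by case: q hp' {up' xz} => [|a q] /= /andP[/and3P[]].
- exact: rX_all hp'.
Qed.

End Conn.


Section Attach.
Variables (T : finType) (D : rel T) (k : nat) (I : finType) (C : I -> seq T).
Hypothesis k3 : 3 <= k.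
Hypothesis noB : ~ has_subdiv_B D k 1 1.
Hypothesis irrD : irreflexive D.
Hypothesis nice : nice_collection D k C.

Definition AA (U : {set I}) i x : {set T} :=
  [set v | (v \in union_vertices C U) && ((v \notin C i) || (v == x))].

Definition Jprop (U : {set I}) := forall w z, w \in union_vertices C U ->
  z \in union_vertices C U -> w != z ->
  exists2 i, i \in U & w \in C i /\ (z \in C i \/ exists2 x, (x \in C i) && (x != w) &
     connect (rX D (AA U i x)) x z /\ connect (rX D (AA U i x)) z x).
Definition SCprop U := forall y z, y \in union_vertices C U -> z \in union_vertices C U ->
  connect (rX D (union_vertices C U)) y z.
Definition Colprop U := exists f : T -> 'I_(2*k-2), forall x y,
  x \in union_vertices C U -> y \in union_vertices C U -> D x y -> f x != f y.

Lemma cycC i : [/\ cycle D (C i), uniq (C i) & 2*k-2 <= size (C i)].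
Proof. by case: nice => /(_ i) [/and3P[_ -> ->] ->]. Qed.

Lemma inter1 i j x y : i != j -> x \in C i -> x \in C j -> y \in C i -> y \in C j -> x = y.
Proof.
case: nice => _ /(_ i j) H ij xi xj yi yj.
move/card_le1P: (H ij) => E1.
have Ax : x \in [pred z | (z \in C i) && (z \in C j)] by rewrite inE xi xj.
have E := E1 x Ax.
have : y \in pred1 x by rewrite -E inE yi yj.
by rewrite inE => /eqP.
Qed.

Lemma memXP (U : {set I}) x : reflect (exists2 i, i \in U & x \in C i) (x \in union_vertices C U).
Proof. by rewrite /union_vertices inE; apply: (iffP exists_inP). Qed.

Lemma Xsub (U : {set I}) i : i \in U -> {subset C i <= union_vertices C U}.
Proof. by move=> iU x xi; apply/memXP; exists i. Qed.

Lemma XU1 (U : {set I}) j x : (x \in union_vertices C (U :|: [set j])) = (x \in union_vertices C U) || (x \in C j).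
Proof.
apply/idP/idP.
- case/memXP => i; rewrite in_setU in_set1 => /orP[iU xi|/eqP -> xj].
  + by apply/orP; left; apply/memXP; exists i.
  + by rewrite xj orbT.
- case/orP => [/memXP [i iU xi]|xj]; apply/memXP.
  + by exists i; rewrite // in_setU iU.
  + by exists j; rewrite // in_setU in_set1 eqxx orbT.
Qed.

Lemma K1 (U : {set I}) j w q : j \notin U -> Jprop U -> w \in C j -> w \in union_vertices C U ->
  q \in C j -> q \in union_vertices C U -> q = w.
Proof.
move=> jU J wj wX qj qX.
case: (eqVneq q w) => // qw; exfalso.
have wq : w != q by rewrite eq_sym.
have [i iU [wi H]] := J w q wX qX wq.
have ij : i != j by apply: contraNneq jU => <-.
have [cj uj sj] := cycC j; have [ci ui si] := cycC i.
case: H => [qi|[x /andP[xi xw] [cxq _]]].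
  by move: (inter1 ij wi wj qi qj) qw => ->; rewrite eqxx.
have xj : x \notin C j.
  by apply/negP => xj; move: (inter1 ij xi xj wi wj) => /eqP; rewrite (negbTE xw).
have xq : x != q by apply: contraNneq xj => ->.
have [p [hp up xA hall]] := extract cxq xq.
have hh : has (fun v => v \in C j) (rcons p q).
  by apply/hasP; exists q; rewrite ?mem_rcons ?inE ?eqxx.
case: (split_find hh) hp up hall => q' r s2 q'j hr hp up hall.
rewrite cat_path in hp; case/andP: hp => hp _.
rewrite -cat_cons cat_uniq in up; case/andP: up => up _.
rewrite all_cat in hall; case/andP: hall => hall _.
have q'A : q' \in AA U i x by move/allP: hall; apply; rewrite mem_rcons inE eqxx.
have q'x : q' != x by apply: contraNneq xj => <-.
have q'i : q' \notin C i.
  by move: q'A; rewrite inE (negbTE q'x) orbF => /andP[].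
have wq' : w != q' by apply: contraNneq q'i => <-.
have [s1 [s2' [cj' uj' ej sz]]] := split2 k3 cj uj wj q'j wq'.
have wx : w != x by rewrite eq_sym.
have [t1 [t2 [ci' ui' ei _]]] := split2 k3 ci ui wi xi wx.
apply: (B2 k3 noB cj' uj' _ ci' ui' _ hp).
- by rewrite -sz.
- apply/allP => z zin; rewrite ej.
  have zi : z \in C i by rewrite -ei inE zin orbT.
  have zw : z != w by apply: contraTneq zin => ->; move: ui'; rewrite cons_uniq => /andP[].
  by apply/negP => zj; move: (inter1 ij zi zj wi wj) => /eqP; rewrite (negbTE zw).
- by move: up; rewrite /= rcons_uniq => /andP[_ /andP[]].
- apply/allP => z zr; rewrite ej; apply/negP => zj.
  by move/hasP: hr; apply; exists z.
- apply/allP => z zr; rewrite ei.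
  have zA : z \in AA U i x by move/allP: hall; apply; rewrite mem_rcons inE zr orbT.
  have zx : z != x.
    by apply: contraTneq zr => ->; move: up => /andP[]; rewrite mem_rcons inE negb_or => /andP[].
  by move: zA; rewrite inE (negbTE zx) orbF => /andP[].
Qed.


Lemma AAP (U : {set I}) i x z : z \in AA U i x -> z != x ->
  z \in union_vertices C U /\ z \notin C i.
Proof. by rewrite inE => /andP[-> /orP[-> //|/eqP->]]; rewrite eqxx. Qed.

Lemma disjCiCj i j w t1 t2 s1 s2 x y : i != j -> w \in C i -> w \in C j ->
  uniq (w :: t1 ++ x :: t2) -> w :: t1 ++ x :: t2 =i C i -> w :: s1 ++ y :: s2 =i C j ->
  disj (t1 ++ x :: t2) (w :: s1 ++ y :: s2).
Proof.
move=> ij wi wj ui' ei ej.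
apply/allP => z zin; rewrite ej.
have zi : z \in C i by rewrite -ei inE zin orbT.
have zw : z != w by apply: contraTneq zin => ->; move: ui'; rewrite cons_uniq => /andP[].
by apply/negP => zj; move: (inter1 ij zi zj wi wj) => /eqP; rewrite (negbTE zw).
Qed.

Lemma K2a (U : {set I}) j w a b : j \notin U -> Jprop U -> w \in C j -> w \in union_vertices C U ->
  a \in C j -> a != w -> b \in union_vertices C U -> b != w -> D a b -> False.
Proof.
move=> jU J wj wX aj aw bX bw dab.
have K := K1 jU J wj wX.
have bj : b \notin C j by apply/negP => bj; move: (K b bj bX) => /eqP; rewrite (negbTE bw).
have wb : w != b by rewrite eq_sym.
have wa : w != a by rewrite eq_sym.
have [i iU [wi H]] := J w b wX bX wb.
have ij : i != j by apply: contraNneq jU => <-.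
have [cj uj sj] := cycC j; have [ci ui si] := cycC i.
have [s1 [s2 [cj' uj' ej sz]]] := split2 k3 cj uj wj aj wa.
have sz' : 2*k-2 <= size s1 + size s2 + 2 by rewrite -sz.
case: (boolP (b \in C i)) => bi.
  have [t1 [t2 [ci' ui' ei _]]] := split2 k3 ci ui wi bi wb.
  apply: (B2' k3 noB (r := [::]) cj' uj' sz' ci' ui' _ _) => //.
  - exact: disjCiCj ij wi wj ui' ei ej.
  - by rewrite /= dab.
case: H => [bi'|[x /andP[xi xw] [_ cbx]]]; first by rewrite bi' in bi.
have bx : b != x by apply: contraNneq bi => ->.
have [p [hp up bA hall]] := extract cbx bx.
have wx : w != x by rewrite eq_sym.
have [t1 [t2 [ci' ui' ei _]]] := split2 k3 ci ui wi xi wx.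
have hz : forall z, z \in b :: p -> z \in union_vertices C U /\ z \notin C i.
  move=> z; rewrite inE => /orP[/eqP->|zp]; first by [].
  apply: (AAP (x := x)).
    by move/allP: hall; apply; rewrite mem_rcons inE zp orbT.
  by apply: contraTneq zp => ->; move: up; rewrite cons_uniq rcons_uniq => /andP[_ /andP[]].
apply: (B2' k3 noB (r := b :: p) cj' uj' sz' ci' ui' _ _) => //.
- exact: disjCiCj ij wi wj ui' ei ej.
- by rewrite rcons_cons /= dab hp.
- by move: up; rewrite /= rcons_uniq mem_rcons inE negb_or => /and3P[/andP[_ ->] _ ->].
- apply/allP => z /hz [zX zi]; rewrite ej; apply/negP => zj.
  have zw : z = w := K z zj zX.
  by rewrite zw wi in zi.
- by apply/allP => z /hz [zX zi]; rewrite ei.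
Qed.

Lemma K2b (U : {set I}) j w a b : j \notin U -> Jprop U -> w \in C j -> w \in union_vertices C U ->
  a \in union_vertices C U -> a != w -> b \in C j -> b != w -> D a b -> False.
Proof.
move=> jU J wj wX aX aw bj bw dab.
have K := K1 jU J wj wX.
have aj : a \notin C j by apply/negP => aj; move: (K a aj aX) => /eqP; rewrite (negbTE aw).
have wb : w != b by rewrite eq_sym.
have wa : w != a by rewrite eq_sym.
have [i iU [wi H]] := J w a wX aX wa.
have ij : i != j by apply: contraNneq jU => <-.
have [cj uj sj] := cycC j; have [ci ui si] := cycC i.
have [s1 [s2 [cj' uj' ej sz]]] := split2 k3 cj uj wj bj wb.
have sz' : 2*k-2 <= size s1 + size s2 + 2 by rewrite -sz.
case: (boolP (a \in C i)) => ai.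
  have [t1 [t2 [ci' ui' ei _]]] := split2 k3 ci ui wi ai wa.
  apply: (B2 k3 noB (r := [::]) cj' uj' sz' ci' ui' _ _) => //.
  - exact: disjCiCj ij wi wj ui' ei ej.
  - by rewrite /= dab.
case: H => [ai'|[x /andP[xi xw] [cxa _]]]; first by rewrite ai' in ai.
have xa : x != a by apply: contraNneq ai => <-.
have [p [hp up xA hall]] := extract cxa xa.
have wx : w != x by rewrite eq_sym.
have [t1 [t2 [ci' ui' ei _]]] := split2 k3 ci ui wi xi wx.
have hz : forall z, z \in rcons p a -> z \in union_vertices C U /\ z \notin C i.
  move=> z zp; apply: (AAP (x := x)); first by move/allP: hall; apply.
  by apply: contraTneq zp => ->; move: up => /andP[].
apply: (B2 k3 noB (r := rcons p a) cj' uj' sz' ci' ui' _ _) => //.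
- exact: disjCiCj ij wi wj ui' ei ej.
- by rewrite rcons_path hp last_rcons dab.
- by move: up => /andP[].
- apply/allP => z /hz [zX zi]; rewrite ej; apply/negP => zj.
  have zw : z = w := K z zj zX.
  by rewrite zw wi in zi.
- by apply/allP => z /hz [zX zi]; rewrite ei.
Qed.

End Attach.

From mathcomp Require Import fingroup perm.

Section Attach2.
Variables (T : finType) (D : rel T) (k : nat) (I : finType) (C : I -> seq T).
Hypothesis k3 : 3 <= k.
Hypothesis noB : ~ has_subdiv_B D k 1 1.
Hypothesis irrD : irreflexive D.
Hypothesis nice : nice_collection D k C.

Variables (U : {set I}) (j : I) (w : T).
Hypothesis jU : j \notin U.
Hypothesis wj : w \in C j.
Hypothesis wX : w \in union_vertices C U.
Hypothesis J : Jprop D C U.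
Hypothesis SC : SCprop D C U.

Let X := union_vertices C U.
Let X' := union_vertices C (U :|: [set j]).

Lemma memAA (V : {set I}) i x v : (v \in AA C V i x) = (v \in union_vertices C V) && ((v \notin C i) || (v == x)).
Proof. by rewrite /AA in_set. Qed.

Lemma XX' : X \subset X'.
Proof. by apply/subsetP => v vX; rewrite /X' XU1 vX. Qed.

Lemma CjX' : {subset C j <= X'}.
Proof. by move=> v vj; rewrite /X' XU1 vj orbT. Qed.

Lemma Kw q : q \in C j -> q \in union_vertices C U -> q = w.
Proof. exact: (K1 k3 noB nice jU J wj wX). Qed.

Lemma attach_col : Colprop D k C U -> Colprop D k C (U :|: [set j]).
Proof.
case=> f Hf.
have [cj uj sj] := cycC nice j.
have [g Hg] := cycle_col k3 noB irrD cj uj sj.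
pose h v := (tperm (g w) (f w) : {perm 'I_(2*k-2)}) (g v).
have hw : h w = f w by rewrite /h tpermL.
have hinj : forall x y, x \in C j -> y \in C j -> D x y -> h x != h y.
  by move=> x y xj yj dxy; rewrite /h (inj_eq perm_inj); apply: Hg.
exists (fun v => if v \in X then f v else h v) => x y.
rewrite /X' !XU1 => xX' yX' dxy.
case: (boolP (x \in X)) => xX; case: (boolP (y \in X)) => yX.
- exact: Hf.
- have yj : y \in C j by move: yX'; rewrite (negbTE yX).
  case: (eqVneq x w) => [exw|xw].
    by rewrite exw -hw; apply: hinj; rewrite // -exw.
  exfalso; apply: (K2b k3 noB nice jU J wj wX xX xw yj _ dxy).
  by apply: contraNneq yX => ->.
- have xj : x \in C j by move: xX'; rewrite (negbTE xX).
  case: (eqVneq y w) => [eyw|yw].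
    by rewrite eyw -hw; apply: hinj; rewrite // -eyw.
  exfalso; apply: (K2a k3 noB nice jU J wj wX xj _ yX yw dxy).
  by apply: contraNneq xX => ->.
- apply: hinj => //; [by move: xX'; rewrite (negbTE xX) | by move: yX'; rewrite (negbTE yX)].
Qed.

Lemma attach_sc : SCprop D C (U :|: [set j]).
Proof.
have [cj uj sj] := cycC nice j.
have cjc : forall y z, y \in C j -> z \in C j -> connect (rX D X') y z.
  by move=> y z yj zj; apply: cycle_conn cj uj _ yj zj; apply: CjX'.
have xc : forall y z, y \in X -> z \in X -> connect (rX D X') y z.
  by move=> y z yX zX; apply: connect_mono XX' _; apply: SC.
rewrite /SCprop => y z; rewrite !XU1 => /orP[yX|yj] /orP[zX|zj].
- exact: xc.
- by apply: connect_trans (xc _ _ yX wX) (cjc _ _ wj zj).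
- by apply: connect_trans (cjc _ _ yj wj) (xc _ _ wX zX).
- exact: cjc.
Qed.

Lemma attach_J : Jprop D C (U :|: [set j]).
Proof.
have [cj uj sj] := cycC nice j.
have jU' : j \in U :|: [set j] by rewrite in_setU in_set1 eqxx orbT.
have U'U : forall i, i \in U -> i \in U :|: [set j] by move=> i iU; rewrite in_setU iU.
have AAmono : forall i x, AA C U i x \subset AA C (U :|: [set j]) i x.
  move=> i x; apply/subsetP => v; rewrite !memAA XU1 => /andP[-> ->] //.
rewrite /Jprop => w' z; rewrite !XU1 => w'X' zX' w'z.
case: (boolP (w' \in X)) => w'X.
  case: (boolP (z \in X)) => zX.
    have [i iU [w'i H]] := J w'X zX w'z.
    exists i; first exact: U'U.
    split => //; case: H => [zi|[x xi [c1 c2]]]; [by left|right].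
    by exists x => //; split; apply: connect_mono (AAmono i x) _.
  have zj : z \in C j by move: zX'; rewrite (negbTE zX).
  case: (eqVneq w' w) => [ew|w'w].
    by exists j => //; split; [rewrite ew | left].
  have [i iU [w'i H]] := J w'X wX w'w.
  have ij : i != j by apply: contraNneq jU => <-.
  exists i; first exact: U'U.
  split => //; right.
  case: (boolP (w \in C i)) => wi.
    exists w; first by rewrite wi eq_sym.
    have sub : {subset C j <= AA C (U :|: [set j]) i w}.
      move=> v vj; rewrite memAA CjX' //=.
      case: (boolP (v \in C i)) => vi //=.
      by rewrite (Kw vj (Xsub iU vi)) eqxx.
    by split; apply: cycle_conn cj uj sub _ _.
  case: H => [wi'|[x /andP[xi xw'] [c1 c2]]]; first by rewrite wi' in wi.
  exists x; first by rewrite xi xw'.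
  have sub : {subset C j <= AA C (U :|: [set j]) i x}.
    move=> v vj; rewrite memAA CjX' //=.
    case: (boolP (v \in C i)) => vi //=.
    by move: wi; rewrite -(Kw vj (Xsub iU vi)) vi.
  split.
  - apply: connect_trans (connect_mono (AAmono i x) c1) _.
    exact: cycle_conn cj uj sub wj zj.
  - apply: connect_trans _ (connect_mono (AAmono i x) c2).
    exact: cycle_conn cj uj sub zj wj.
have w'j : w' \in C j by move: w'X'; rewrite (negbTE w'X).
exists j => //; split => //.
case: (boolP (z \in C j)) => zj; [by left|right].
have zX : z \in X by move: zX'; rewrite (negbTE zj) orbF.
have ww' : w != w' by apply: contraNneq w'X => <-.
exists w; first by rewrite wj.
have sub : X \subset AA C (U :|: [set j]) j w.
  apply/subsetP => v vX; rewrite memAA XU1 vX /=.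
  case: (boolP (v \in C j)) => vj //=.
  by rewrite (Kw vj vX) eqxx.
by split; apply: connect_mono sub _; apply: SC.
Qed.

End Attach2.


Lemma cross (I : finType) (e : rel I) (U : {set I}) x p :
  path e x p -> x \in U -> last x p \notin U -> exists a b, [/\ a \in U, b \notin U & e a b].
Proof.
elim: p x => [|y p IH] x /=; first by move=> _ ->.
case/andP => exy hp xU hl.
case: (boolP (y \in U)) => yU; first exact: IH hp yU hl.
by exists x, y.
Qed.

Section Final.
Variables (T : finType) (D : rel T) (k : nat) (I : finType) (C : I -> seq T).
Hypothesis k3 : 3 <= k.
Hypothesis noB : ~ has_subdiv_B D k 1 1.
Hypothesis irrD : irreflexive D.
Hypothesis nice : nice_collection D k C.

Definition Inv U := [/\ Colprop D k C U, SCprop D C U & Jprop D C U].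

Lemma X1 i0 v : (v \in union_vertices C [set i0]) = (v \in C i0).
Proof.
apply/memXP/idP => [[i]|vi]; first by rewrite in_set1 => /eqP->.
by exists i0; rewrite ?in_set1.
Qed.

Lemma Inv1 i0 : Inv [set i0].
Proof.
have [ci ui si] := cycC nice i0.
split.
- have [f Hf] := cycle_col k3 noB irrD ci ui si.
  by exists f => x y; rewrite !X1; apply: Hf.
- rewrite /SCprop => y z; rewrite !X1 => yi zi.
  by apply: cycle_conn ci ui _ yi zi => v; rewrite X1.
- rewrite /Jprop => w z; rewrite !X1 => wi zi _.
  by exists i0; rewrite ?in_set1 //; split => //; left.
Qed.

Variables (S : {set I}) (i0 : I).
Hypothesis hS : S = [set j | connect (share_vertex C) i0 j].

Lemma grow n : exists U : {set I}, [/\ U \subset S, i0 \in U, Inv U & (n <= #|U| \/ U = S)].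
Proof.
elim: n => [|n [U [US i0U IU hn]]].
  exists [set i0]; split; rewrite ?in_set1 //; last by left.
  - by apply/subsetP => x; rewrite in_set1 hS inE => /eqP ->; apply: connect0.
  - exact: Inv1.
case: (eqVneq U S) => [EUS|NUS]; first by exists U; split => //; right.
case: hn => [hn|EUS]; last by rewrite EUS eqxx in NUS.
have [j1 j1S j1U] : exists2 j1, j1 \in S & j1 \notin U.
  apply/exists_inP; apply: contraR NUS => H; rewrite eqEsubset US /=.
  apply/subsetP => x xS; apply: contraR H => xU; apply/exists_inP; exists x => //.
have : connect (share_vertex C) i0 j1 by move: j1S; rewrite hS inE.
case/connectP => p hp el.
have hl : last i0 p \notin U by rewrite -el.
have [a [b [aU bU eab]]] := cross hp i0U hl.
have bS : b \in S.
  rewrite hS inE; apply: connect_trans (connect1 eab).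
  by move/subsetP: US => /(_ a aU); rewrite hS inE.
case/hasP: eab => w wa wb.
have wX : w \in union_vertices C U by apply: (Xsub aU).
case: IU => ICol ISC IJ.
exists (U :|: [set b]); split.
- by rewrite subUset US sub1set.
- by rewrite in_setU i0U.
- split.
  + exact: (attach_col k3 noB irrD nice bU wb wX IJ ICol).
  + exact: (attach_sc nice wb wX ISC).
  + exact: (attach_J k3 noB nice bU wb wX IJ ISC).
- left; rewrite setUC cardsU1 (negbTE bU) /=; lia.
Qed.

End Final.

Theorem mainTheorem10 (k : nat) (T : finType) (D : rel T) (I : finType)
  (C : I -> seq T) (S : {set I}) :
  3 <= k ->
  irreflexive D ->
  ~ has_subdiv_B D k 1 1 ->
  nice_collection D k C ->
  is_component C S ->
  induced_colorable D (union_vertices C S) (2 * k - 2).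
Proof.
move=> k3 irrD noB nice [i0 hS].
have [U [US i0U [ICol _ _] hn]] := grow k3 noB irrD nice hS #|I|.+1.
case: hn => [hn|EUS].
  by have := max_card U; lia.
by rewrite -EUS.
Qed.
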